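(* For $n\ge 0$ let $U_n \equiv \mathbf{B}Y_0\mathbf{S}\cdots\mathbf{S}\mathbf{I}$ with exactly $n$ copies of $\mathbf{S}$ (the Scott sequence). Then $U_n \neq_\beta U_m$ for all $n\neq m$.
   Context: Untyped $\lambda$-calculus modulo $\alpha$; application associates to the left. $\mathbf{I}\equiv\lambda x.x$, $\mathbf{S}\equiv\lambda xyz.\,xz(yz)$, $\mathbf{B}\equiv\lambda xyz.\,x(yz)$, and $Y_0\equiv\lambda f.\,\omega_f\omega_f$ with $\omega_f\equiv\lambda x.\,f(xx)$ (Curry's fixed point combinator). *)

(* Defs.v *)
(* untyped lambda calculus with de Bruijn indices
   (this represents terms modulo alpha-conversion). *)
From Stdlib Require Import Arith Relations.

Inductive term : Type :=
| Var : nat -> term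
| App : term -> term -> term
| Lam : term -> term.

Fixpoint lift (c : nat) (t : term) : term :=
  match t with
  | Var n => if n <? c then Var n else Var (S n)
  | App a b => App (lift c a) (lift c b)
  | Lam a => Lam (lift (S c) a)
  end.

Fixpoint subst (k : nat) (u : term) (t : term) : term :=
  match t with
  | Var n => if n =? k then u else if k <? n then Var (pred n) else Var n
  | App a b => App (subst k u a) (subst k u b)
  | Lam a => Lam (subst (S k) (lift 0 u) a)
  end.

Inductive beta : term -> term -> Prop :=
| beta_redex : forall a b, beta (App (Lam a) b) (subst 0 b a)
| beta_appl : forall a a' b, beta a a' -> beta (App a b) (App a' b)
| beta_appr : forall a b b', beta b b' -> beta (App a b) (App a b')
| beta_lam : forall a a', beta a a' -> beta (Lam a) (Lam a').

Definition beta_eq : term -> term -> Prop := clos_refl_sym_trans term beta.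

Definition I_comb : term := Lam (Var 0).
(* S = \xyz. x z (y z) *)
Definition S_comb : term :=
  Lam (Lam (Lam (App (App (Var 2) (Var 0)) (App (Var 1) (Var 0))))).
(* B = \xyz. x (y z) *)
Definition B_comb : term :=
  Lam (Lam (Lam (App (Var 2) (App (Var 1) (Var 0))))).
(* omega_f = \x. f (x x), with f the variable bound by Y0 *)
Definition omega_f : term := Lam (App (Var 1) (App (Var 0) (Var 0))).
Definition Y0 : term := Lam (App omega_f omega_f).

Fixpoint scott_prefix (n : nat) : term :=
  match n with
  | O => App B_comb Y0
  | S k => App (scott_prefix k) S_comb
  end.

Definition U (n : nat) : term := App (scott_prefix n) I_comb.

(* Main.v *)
Require Import Defs.
From Stdlib Require Import Arith Lia List Relations.
Import ListNotations.

Ltac vcase :=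
  repeat match goal with
  | |- context [Nat.ltb ?a ?b] => destruct (Nat.ltb_spec a b)
  | |- context [Nat.eqb ?a ?b] => destruct (Nat.eqb_spec a b)
  end.

Lemma lift_lift : forall t c d, c <= d -> lift c (lift d t) = lift (S d) (lift c t).
Proof.
  induction t; intros c d H; simpl.
  - vcase; cbn [lift subst]; vcase; try reflexivity; lia.
  - f_equal; auto.
  - f_equal; apply IHt; lia.
Qed.

Lemma subst_lift : forall t c u, subst c u (lift c t) = t.
Proof.
  induction t; intros c u; simpl.
  - vcase; cbn [lift subst]; vcase; try reflexivity; lia.
  - f_equal; auto.
  - f_equal; auto.
Qed.

Lemma lift_subst_lo : forall t c d u, c <= d ->
  lift c (subst d u t) = subst (S d) (lift c u) (lift c t).
Proof.
  induction t; intros c d u H; simpl.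
  - vcase; cbn [lift subst]; vcase; try reflexivity; try lia; try (f_equal; lia).
  - f_equal; auto.
  - f_equal. rewrite IHt by lia. f_equal. symmetry; apply lift_lift; lia.
Qed.

Lemma lift_subst_hi : forall t c d u, d <= c ->
  lift c (subst d u t) = subst d (lift c u) (lift (S c) t).
Proof.
  induction t; intros c d u H; simpl.
  - vcase; cbn [lift subst]; vcase; try reflexivity; try lia; try (f_equal; lia).
  - f_equal; auto.
  - f_equal. rewrite IHt by lia. f_equal. symmetry; apply lift_lift; lia.
Qed.

Lemma subst_subst : forall t c d u v, d <= c ->
  subst c v (subst d u t) = subst d (subst c v u) (subst (S c) (lift d v) t).
Proof.
  induction t; intros c d u v H; simpl.
  - vcase; cbn [lift subst]; vcase; try reflexivity; try lia; try (f_equal; lia).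
    + subst. rewrite subst_lift. reflexivity.
  - f_equal; auto.
  - f_equal. rewrite IHt by lia. f_equal.
    + symmetry. apply lift_subst_lo. lia.
    + f_equal. symmetry; apply lift_lift; lia.
Qed.

Inductive red : term -> term -> Prop :=
| red_refl t : red t t
| red_step a b c : beta a b -> red b c -> red a c.

Lemma red_trans : forall a b c, red a b -> red b c -> red a c.
Proof. intros a b c H; induction H; intros; eauto using red. Qed.

Lemma red1 : forall a b, beta a b -> red a b.
Proof. eauto using red. Qed.

Lemma red_appl : forall a a' b, red a a' -> red (App a b) (App a' b).
Proof. intros a a' b H; induction H; eauto using red, beta. Qed.
Lemma red_appr : forall a b b', red b b' -> red (App a b) (App a b').
Proof. intros a b b' H; induction H; eauto using red, beta. Qed.
Lemma red_app : forall a a' b b', red a a' -> red b b' -> red (App a b) (App a' b').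
Proof. intros. eapply red_trans; [apply red_appl|apply red_appr]; eauto. Qed.
Lemma red_lam : forall a a', red a a' -> red (Lam a) (Lam a').
Proof. intros a a' H; induction H; eauto using red, beta. Qed.

Inductive par : term -> term -> Prop :=
| par_var n : par (Var n) (Var n)
| par_app a a' b b' : par a a' -> par b b' -> par (App a b) (App a' b')
| par_lam a a' : par a a' -> par (Lam a) (Lam a')
| par_beta a a' b b' : par a a' -> par b b' -> par (App (Lam a) b) (subst 0 b' a').

Lemma par_refl : forall t, par t t.
Proof. induction t; constructor; auto. Qed.

Lemma beta_par : forall a b, beta a b -> par a b.
Proof. intros a b H; induction H; constructor; auto using par_refl. Qed.

Lemma par_red : forall a b, par a b -> red a b.
Proof.
  intros a b H; induction H.
  - apply red_refl.
  - apply red_app; auto.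
  - apply red_lam; auto.
  - eapply red_trans. apply red_app. apply red_lam. eauto. eauto.
    apply red1. constructor.
Qed.

Lemma par_lift : forall a a', par a a' -> forall c, par (lift c a) (lift c a').
Proof.
  intros a a' H; induction H; intros c; simpl; try constructor; auto.
  - apply par_refl.
  - rewrite lift_subst_hi by lia. constructor; auto.
Qed.

Lemma par_subst : forall a a', par a a' -> forall b b', par b b' -> forall k,
  par (subst k b a) (subst k b' a').
Proof.
  intros a a' H; induction H; intros c c' Hc k; simpl.
  - destruct (n =? k); [auto|]. destruct (k <? n); apply par_refl.
  - constructor; auto.
  - constructor; apply IHpar. apply par_lift; auto.
  - rewrite subst_subst by lia. constructor; auto. apply IHpar1. apply par_lift; auto.
Qed.

Fixpoint dev (t : term) : term :=
  match t with
  | Var n => Var n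
  | Lam a => Lam (dev a)
  | App (Lam a) b => subst 0 (dev b) (dev a)
  | App a b => App (dev a) (dev b)
  end.

Lemma par_dev : forall a b, par a b -> par b (dev a).
Proof.
  intros a b H; induction H; simpl.
  - constructor.
  - destruct a; try (constructor; auto; fail).
    inversion H; subst. simpl in IHpar1. inversion IHpar1; subst.
    constructor; auto.
  - constructor; auto.
  - apply par_subst; auto.
Qed.

Lemma strip : forall a b, par a b -> forall c, red a c -> exists d, red b d /\ par c d.
Proof.
  intros a b Hab c Hac. revert b Hab. induction Hac; intros.
  - exists b; split; [apply red_refl|auto].
  - apply beta_par in H.
    destruct (IHHac (dev a)) as [d [H1 H2]]. apply par_dev; auto.
    exists d; split; auto. eapply red_trans; [apply par_red, par_dev, Hab|]; auto.
Qed.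

Lemma confl : forall a b c, red a b -> red a c -> exists d, red b d /\ red c d.
Proof.
  intros a b c Hab. revert c. induction Hab; intros.
  - exists c; split; auto using red_refl.
  - apply beta_par in H. destruct (strip _ _ H _ H0) as [d [H1 H2]].
    destruct (IHHab d) as [e [H3 H4]]; auto.
    exists e; split; auto. eapply red_trans; [apply par_red; eauto|auto].
Qed.

Lemma CR : forall a b, beta_eq a b -> exists c, red a c /\ red b c.
Proof.
  intros a b H; induction H.
  - exists y; split; auto using red1, red_refl.
  - exists x; split; apply red_refl.
  - destruct IHclos_refl_sym_trans as [c [H1 H2]]; eauto.
  - destruct IHclos_refl_sym_trans1 as [c1 [H1 H2]].
    destruct IHclos_refl_sym_trans2 as [c2 [H3 H4]].
    destruct (confl _ _ _ H2 H3) as [d [H5 H6]].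
    exists d; split; eapply red_trans; eauto.
Qed.

Lemma red_beq : forall a b, red a b -> beta_eq a b.
Proof.
  intros a b H; induction H. apply rst_refl.
  eapply rst_trans; [apply rst_step; eauto|auto].
Qed.

Inductive ty := O | Arr (A B : ty).

Inductive typ (cr : term -> ty -> Prop) : list ty -> term -> ty -> Prop :=
| t_var G n A : nth_error G n = Some A -> typ cr G (Var n) A
| t_lam G A B b : typ cr (A :: G) b B -> typ cr G (Lam b) (Arr A B)
| t_app G A B f a : typ cr G f (Arr A B) -> typ cr G a A -> typ cr G (App f a) B
| t_cr G t A : cr t A -> typ cr G t A.

Fixpoint ins (c : nat) (U : ty) (G : list ty) : list ty :=
  match c, G with
  | 0, _ => U :: G
  | S c', A :: G' => A :: ins c' U G'
  | S c', [] => [U]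
  end.

Lemma ins_lt : forall c U G n, c <= length G -> n < c -> nth_error (ins c U G) n = nth_error G n.
Proof.
  induction c; intros U G n H1 H2; [lia|]. destruct G; simpl in *; [lia|].
  destruct n; simpl; auto. apply IHc; lia.
Qed.
Lemma ins_eq : forall c U G, c <= length G -> nth_error (ins c U G) c = Some U.
Proof.
  induction c; intros U G H1; [reflexivity|]. destruct G; simpl in *; [lia|].
  apply IHc; lia.
Qed.
Lemma ins_gt : forall c U G n, c <= length G -> c <= n -> nth_error (ins c U G) (S n) = nth_error G n.
Proof.
  induction c; intros U G n H1 H2; [reflexivity|]. destruct G; simpl in *; [lia|].
  destruct n; [lia|]. simpl. apply IHc; lia.
Qed.
Lemma ins_length : forall c U G, c <= length G -> length (ins c U G) = S (length G).
Proof.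
  induction c; intros U G H; simpl; auto. destruct G; simpl in *; [lia|]. rewrite IHc; auto; lia.
Qed.

Section Typing.
Variable cr : term -> ty -> Prop.
Hypothesis cr_lift : forall t A c, cr t A -> lift c t = t.
Hypothesis cr_subst : forall t A k u, cr t A -> subst k u t = t.

Lemma typ_lift : forall G t T, typ cr G t T -> forall c U, c <= length G ->
  typ cr (ins c U G) (lift c t) T.
Proof.
  intros G t T H; induction H; intros c U Hc; simpl.
  - assert (n < length G) by (apply nth_error_Some; congruence).
    destruct (Nat.ltb_spec n c); constructor.
    + rewrite ins_lt; auto.
    + rewrite ins_gt; auto.
  - constructor. apply (IHtyp (S c) U). simpl; lia.
  - econstructor; eauto.
  - erewrite cr_lift by eauto. apply t_cr; auto.
Qed.

Lemma typ_subst : forall G' t T, typ cr G' t T -> forall k A G u, G' = ins k A G ->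
  k <= length G -> typ cr G u A -> typ cr G (subst k u t) T.
Proof.
  intros G' t T H; induction H; intros k A0 G0 u HG Hk Hu; subst; simpl.
  - destruct (Nat.eqb_spec n k).
    + subst. rewrite ins_eq in H by auto. inversion H; subst; auto.
    + destruct (Nat.ltb_spec k n).
      * constructor. destruct n; [lia|]. rewrite ins_gt in H by (auto; lia). auto.
      * constructor. rewrite ins_lt in H by (auto; lia). auto.
  - constructor. eapply (IHtyp (S k) A0 (A :: G0)); simpl; auto; try lia.
    apply (typ_lift _ _ _ Hu 0). lia.
  - econstructor; eauto.
  - erewrite cr_subst by eauto. apply t_cr; auto.
Qed.

Hypothesis cr_lam : forall a A, ~ cr (Lam a) A.
Hypothesis cr_step : forall t A t', cr t A -> beta t t' -> forall G, typ cr G t' A.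

Lemma sr : forall t t', beta t t' -> forall G T, typ cr G t T -> typ cr G t' T.
Proof.
  intros t t' H; induction H; intros G T HT.
  - inversion HT; subst.
    + inversion H2; subst.
      * eapply typ_subst; eauto. reflexivity. simpl; lia.
      * exfalso; eapply cr_lam; eauto.
    + eapply cr_step; eauto. constructor.
  - inversion HT; subst.
    + econstructor; eauto.
    + eapply cr_step; eauto. constructor; auto.
  - inversion HT; subst.
    + econstructor; eauto.
    + eapply cr_step; eauto. constructor; auto.
  - inversion HT; subst.
    + constructor; eauto.
    + eapply cr_step; eauto. constructor; auto.
Qed.

Lemma sr_red : forall t t', red t t' -> forall G T, typ cr G t T -> typ cr G t' T.
Proof. intros t t' H; induction H; intros; eauto using sr. Qed.

End Typing.

Lemma term_eq_dec : forall x y : term, {x = y} + {x <> y}.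
Proof. decide equality; apply Nat.eq_dec. Qed.

Definition nocr : term -> ty -> Prop := fun _ _ => False.
Definition ptyp := typ nocr.

Lemma p_sr_red : forall t t', red t t' -> forall G T, ptyp G t T -> ptyp G t' T.
Proof.
  intros. eapply sr_red; eauto; unfold nocr; intros; try contradiction; tauto.
Qed.
Lemma p_typ_lift : forall G t T, ptyp G t T -> forall c U, c <= length G ->
  ptyp (ins c U G) (lift c t) T.
Proof. intros. eapply typ_lift; eauto. unfold nocr; tauto. Qed.
Lemma p_typ_subst : forall k A G t T u, ptyp (ins k A G) t T ->
  k <= length G -> ptyp G u A -> ptyp G (subst k u t) T.
Proof. intros. eapply typ_subst; eauto; unfold nocr; tauto. Qed.

Fixpoint neutral (t : term) : Prop :=
  match t with
  | Var _ => True
  | App f a => neutral f /\ normal a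
  | Lam _ => False
  end
with normal (t : term) : Prop :=
  match t with
  | Var _ => True
  | App f a => neutral f /\ normal a
  | Lam b => normal b
  end.

Lemma lift_normal : forall t c, (neutral t -> neutral (lift c t)) /\ (normal t -> normal (lift c t)).
Proof.
  induction t; intros c; simpl.
  - destruct (n <? c); simpl; auto.
  - destruct (IHt1 c), (IHt2 c). split; intros [? ?]; split; auto.
  - split; [tauto|]. apply IHt.
Qed.

Lemma neutral_normal : forall t, neutral t -> normal t.
Proof. destruct t; simpl; tauto. Qed.

Fixpoint tsize (A : ty) : nat := match A with O => 1 | Arr A B => S (tsize A + tsize B) end.

Inductive suffix : ty -> ty -> Prop :=
| suf_refl A : suffix A A
| suf_arr T A B : suffix T B -> suffix T (Arr A B).

Lemma suffix_size : forall T A, suffix T A -> tsize T <= tsize A.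
Proof. intros T A H; induction H; simpl; lia. Qed.
Lemma suffix_cod : forall C T A, suffix (Arr C T) A -> suffix T A.
Proof. intros C T A H. remember (Arr C T) as X. induction H; subst; constructor; auto. constructor. Qed.

Fixpoint head (t : term) : term := match t with App f _ => head f | _ => t end.

Definition SubL (A : ty) := forall t G k u T, k <= length G -> ptyp (ins k A G) t T ->
  ptyp G u A -> normal u ->
  (normal t -> exists v, red (subst k u t) v /\ normal v) /\
  (neutral t -> exists v, red (subst k u t) v /\ normal v /\ (head t <> Var k -> neutral v)
      /\ (head t = Var k -> suffix T A)).

Definition AppL (A : ty) := forall G u a B, ptyp G u (Arr A B) -> ptyp G a A ->
  normal u -> normal a -> exists v, red (App u a) v /\ normal v.

Lemma appL_of_subL : forall A, SubL A -> AppL A.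
Proof.
  intros A HS G u a B Hu Ha Nu Na. destruct u.
  - exists (App (Var n) a). split; [apply red_refl|simpl; auto].
  - exists (App (App u1 u2) a). split; [apply red_refl|]. simpl in *. tauto.
  - inversion Hu; subst; [|contradiction].
    destruct (HS u G 0 a B ltac:(simpl; lia) H2 Ha Na) as [H _].
    destruct (H Nu) as [v [Hv Nv]]. exists v; split; auto.
    eapply red_step; [constructor|auto].
Qed.

Lemma subL_step : forall A, (forall C, tsize C < tsize A -> AppL C) -> SubL A.
Proof.
  intros A IH t. induction t; intros G k u T Hk Ht Hu Nu.
  - simpl. destruct (Nat.eqb_spec n k).
    + subst. inversion Ht; subst; [|contradiction]. rewrite ins_eq in H1 by auto.
      inversion H1; subst.
      split; intros _; exists u; repeat split; auto; try (apply red_refl); try congruence.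
      intros _; constructor.
    + assert (forall x, neutral x -> normal x) by apply neutral_normal.
      destruct (k <? n); split; intros _; eexists; split; try apply red_refl.
      all: simpl; repeat split; auto; intros E; inversion E; congruence.
  - inversion Ht; subst; [|contradiction].
    destruct (IHt1 G k u (Arr A0 T) Hk H2 Hu Nu) as [_ IH1].
    destruct (IHt2 G k u A0 Hk H4 Hu Nu) as [IH2 _].
    assert (Hneu : neutral (App t1 t2) -> exists v, red (subst k u (App t1 t2)) v /\ normal v /\
        (head (App t1 t2) <> Var k -> neutral v) /\ (head (App t1 t2) = Var k -> suffix T A)).
    { intros [N1 N2]. destruct (IH1 N1) as [v1 [R1 [M1 [H1a H1b]]]].
      destruct (IH2 N2) as [v2 [R2 M2]]. simpl.
      destruct (term_eq_dec (head t1) (Var k)) as [E|E].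
      - specialize (H1b E).
        assert (Hs : tsize A0 < tsize A).
        { apply suffix_size in H1b. simpl in H1b. lia. }
        assert (T1 : ptyp G v1 (Arr A0 T)).
        { eapply p_sr_red; eauto. eapply p_typ_subst; eauto. }
        assert (T2 : ptyp G v2 A0).
        { eapply p_sr_red; eauto. eapply p_typ_subst; eauto. }
        destruct (IH A0 Hs G v1 v2 T T1 T2 M1 M2) as [v [Rv Nv]].
        exists v. split; [eapply red_trans; [apply red_app; eauto|auto]|].
        split; [auto|]. split; [intros; contradiction|].
        intros _. eapply suffix_cod; eauto.
      - exists (App v1 v2). split; [apply red_app; auto|].
        split; [simpl; auto|]. split; [simpl; auto|].
        intros; contradiction. }
    split; [|exact Hneu]. intros N. destruct (Hneu N) as [v [? [? _]]]. eauto.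
  - inversion Ht; subst; [|contradiction]. split; [|simpl; tauto]. intros Nb.
    simpl in Nb.
    destruct (IHt (A0 :: G) (S k) (lift 0 u) B ltac:(simpl; lia) ltac:(assumption)
       (p_typ_lift _ _ _ Hu 0 A0 ltac:(lia)) (proj2 (lift_normal u 0) Nu)) as [H _].
    destruct (H Nb) as [v [Rv Nv]]. exists (Lam v). split; [apply red_lam; auto|simpl; auto].
Qed.

Lemma hered : forall n A, tsize A <= n -> SubL A /\ AppL A.
Proof.
  induction n; intros A HA.
  - destruct A; simpl in HA; lia.
  - assert (SubL A). { apply subL_step. intros C HC. apply IHn. lia. }
    split; auto. apply appL_of_subL; auto.
Qed.

Lemma WN : forall G t T, ptyp G t T -> exists v, red t v /\ normal v.
Proof.
  intros G t T H; induction H.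
  - exists (Var n); split; [apply red_refl|simpl; auto].
  - destruct IHtyp as [v [R N]]. exists (Lam v). split; [apply red_lam|]; auto.
  - destruct IHtyp1 as [v1 [R1 N1]], IHtyp2 as [v2 [R2 N2]].
    destruct (proj2 (hered _ A (le_n _)) G v1 v2 B) as [v [R N]]; auto.
    + eapply p_sr_red; eauto.
    + eapply p_sr_red; eauto.
    + exists v; split; auto. eapply red_trans; [apply red_app; eauto|auto].
  - contradiction.
Qed.

Fixpoint red1p (p : list nat) (t : term) : option term :=
  match p, t with
  | [], App (Lam a) b => Some (subst 0 b a)
  | 0 :: p', App a b => option_map (fun a' => App a' b) (red1p p' a)
  | 1 :: p', App a b => option_map (fun b' => App a b') (red1p p' b)
  | 2 :: p', Lam a => option_map Lam (red1p p' a)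
  | _, _ => None
  end.

Lemma red1p_sound : forall p t t', red1p p t = Some t' -> beta t t'.
Proof.
  induction p as [|d p IH]; intros t t' H.
  - destruct t; try discriminate. destruct t1; try discriminate. inversion H; constructor.
  - destruct d as [|[|[|d]]]; destruct t; try discriminate; simpl in H;
    destruct (red1p p _) eqn:E; try discriminate; inversion H; subst; constructor; eauto.
Qed.

Fixpoint redps (ps : list (list nat)) (t : term) : option term :=
  match ps with
  | [] => Some t
  | p :: ps' => match red1p p t with Some t' => redps ps' t' | None => None end
  end.

Lemma redps_sound : forall ps t t', redps ps t = Some t' -> red t t'.
Proof.
  induction ps; intros t t' H; simpl in H.
  - inversion H; apply red_refl.
  - destruct (red1p a t) eqn:E; try discriminate.
    eapply red_step; [eapply red1p_sound; eauto|eauto].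
Qed.

Definition om1 := Lam (Lam (App (Var 0) (App (App (Var 1) (Var 1)) (Var 0)))).
Definition core1 := App om1 om1.
Definition omp := Lam (Lam (Lam (App (App (Var 1) (Var 0))
   (App (App (App (Var 2) (Var 2)) (Var 1)) (Var 0))))).
Definition corep := App omp omp.
Definition Omg := App (Lam (App (Var 0) (Var 0))) (Lam (App (Var 0) (Var 0))).

Fixpoint aa (i : nat) : ty :=
  match i with 0 => Arr O O | S i => Arr (aa i) (Arr (kk i) (kk i)) end
with kk (i : nat) : ty :=
  match i with 0 => O | S i => Arr (aa i) (kk i) end.

Fixpoint ar (T : ty) : nat := match T with O => 0 | Arr _ B => S (ar B) end.
Lemma ar_kk : forall i, ar (kk i) = i.
Proof. induction i; simpl; auto. Qed.

Definition crn (n : nat) (t : term) (A : ty) : Prop :=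
  (n = 1 /\ t = core1 /\ A = kk 1) \/ (2 <= n /\ t = corep /\ A = kk n).

Fixpoint hr (t : term) : bool :=
  match t with
  | Var _ => false
  | Lam a => hr a
  | App (Lam _) _ => true
  | App a b => hr a || hr b
  end.

Lemma beta_hr : forall t t', beta t t' -> hr t = true.
Proof.
  intros t t' H; induction H; simpl; auto.
  - destruct a; try reflexivity; rewrite IHbeta; reflexivity.
  - destruct a; try reflexivity; rewrite IHbeta; apply Bool.orb_true_r.
Qed.

Ltac crn_absurd :=
  match goal with H : crn _ _ _ |- _ =>
    destruct H as [[_ [H _]]|[_ [H _]]]; discriminate H end.

Lemma ty_noncyc : forall A B, A <> Arr A B.
Proof. induction A; intros B H; inversion H; subst. eapply IHA1; eauto. Qed.

Ltac inv_typ H := inversion H; subst; try crn_absurd; clear H.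

Lemma selfapp_untyp : forall n G i T, ~ typ (crn n) G (App (Var i) (Var i)) T.
Proof.
  intros n G i T H. inv_typ H.
  repeat match goal with H : typ _ _ (Var _) _ |- _ => inv_typ H end.
  match goal with H1 : nth_error G i = Some ?X, H2 : nth_error G i = Some ?Y |- _ =>
    rewrite H1 in H2; inversion H2 end.
  eapply ty_noncyc; eauto.
Qed.

Ltac untyp_tac :=
  repeat match goal with
   | H : typ (crn _) _ (App (Var ?i) (Var ?i)) _ |- _ => exfalso; eapply selfapp_untyp; exact H
   | H : typ (crn _) _ (Lam _) _ |- _ => inv_typ H
   | H : typ (crn _) _ (App _ _) _ |- _ => inv_typ H
  end.

Lemma om1_untyp : forall n G T, ~ typ (crn n) G om1 T.
Proof. intros n G T H. unfold om1 in H. untyp_tac. Qed.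

Lemma omp_untyp : forall n G T, ~ typ (crn n) G omp T.
Proof. intros n G T H. unfold omp in H. untyp_tac. Qed.

Lemma crn_lift : forall n t A c, crn n t A -> lift c t = t.
Proof. intros n t A c [[_ [-> _]]|[_ [-> _]]]; reflexivity. Qed.
Lemma crn_subst : forall n t A k u, crn n t A -> subst k u t = t.
Proof. intros n t A k u [[_ [-> _]]|[_ [-> _]]]; reflexivity. Qed.
Lemma crn_lam : forall n a A, ~ crn n (Lam a) A.
Proof. intros n a A H. crn_absurd. Qed.

Lemma crn_step : forall n t A t', crn n t A -> beta t t' -> forall G, typ (crn n) G t' A.
Proof.
  intros n t A t' [[Hn [-> ->]]|[Hn [-> ->]]] Hb G.
  - inversion Hb; subst.
    + cbn. apply t_lam. eapply t_app; [apply t_var; reflexivity|].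
      eapply t_app; [apply t_cr; left; split; [reflexivity|split; reflexivity]|apply t_var; reflexivity].
    + apply beta_hr in H2; discriminate.
    + apply beta_hr in H2; discriminate.
  - destruct n as [|[|j]]; [lia|lia|].
    inversion Hb; subst.
    + cbn. apply t_lam. apply t_lam. eapply t_app.
      * eapply t_app; apply t_var; reflexivity.
      * eapply t_app; [eapply t_app|apply t_var; reflexivity].
        -- apply t_cr. right. split; [lia|split; reflexivity].
        -- apply t_var; reflexivity.
    + apply beta_hr in H2; discriminate.
    + apply beta_hr in H2; discriminate.
Qed.

Lemma sr_n : forall n t t' G T, red t t' -> typ (crn n) G t T -> typ (crn n) G t' T.
Proof.
  intros. eapply sr_red; eauto.
  - intros; eapply crn_lift; eauto.
  - intros; eapply crn_subst; eauto.
  - intros; apply crn_lam.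
  - intros; eapply crn_step; eauto.
Qed.

Definition is_core (t : term) : bool :=
  if term_eq_dec t core1 then true else if term_eq_dec t corep then true else false.

Fixpoint flat (d : nat) (t : term) : term :=
  if is_core t then Var d else
  match t with
  | Var n => Var n
  | App a b => App (flat d a) (flat d b)
  | Lam b => Lam (flat (S d) b)
  end.

Lemma flat_eq : forall d t, flat d t = if is_core t then Var d else
  match t with
  | Var n => Var n
  | App a b => App (flat d a) (flat d b)
  | Lam b => Lam (flat (S d) b)
  end.
Proof. intros d t; destruct t; reflexivity. Qed.

Lemma flat_typ : forall n G t T, typ (crn n) G t T ->
  ptyp (G ++ [kk n]) (flat (length G) t) T.
Proof.
  intros n G t T H; induction H.
  - simpl. unfold is_core.
    destruct (term_eq_dec (Var n0) core1); [discriminate|].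
    destruct (term_eq_dec (Var n0) corep); [discriminate|].
    constructor. rewrite nth_error_app1; auto. apply nth_error_Some; congruence.
  - simpl. unfold is_core.
    destruct (term_eq_dec (Lam b) core1); [discriminate|].
    destruct (term_eq_dec (Lam b) corep); [discriminate|].
    constructor. apply IHtyp.
  - simpl. unfold is_core.
    destruct (term_eq_dec (App f a) core1) as [E|E].
    { inversion E; subst. exfalso; eapply om1_untyp; eauto. }
    destruct (term_eq_dec (App f a) corep) as [E'|E'].
    { inversion E'; subst. exfalso; eapply omp_untyp; eauto. }
    econstructor; eauto.
  - destruct H as [[Hn [-> ->]]|[Hn [-> ->]]]; rewrite flat_eq; unfold is_core.
    + destruct (term_eq_dec core1 core1); [|congruence].
      constructor. rewrite nth_error_app2 by lia. rewrite Nat.sub_diag. subst; reflexivity.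
    + destruct (term_eq_dec corep core1); [discriminate|].
      destruct (term_eq_dec corep corep); [|congruence].
      constructor. rewrite nth_error_app2 by lia. rewrite Nat.sub_diag. reflexivity.
Qed.

Ltac nocr_tac := match goal with H : nocr _ _ |- _ => destruct H end.

Fixpoint apps (t : term) (l : list term) : term :=
  match l with [] => t | x :: l' => apps (App t x) l' end.

Lemma apps_snoc : forall l t x, apps t (l ++ [x]) = App (apps t l) x.
Proof. induction l; intros; simpl; auto. Qed.

Lemma neutral_spine : forall t, neutral t -> exists h l, t = apps (Var h) l.
Proof.
  induction t; simpl; intros H.
  - exists n, []; reflexivity.
  - destruct H as [H1 _]. destruct (IHt1 H1) as [h [l E]]. subst.
    exists h, (l ++ [t2]). rewrite apps_snoc; reflexivity.
  - contradiction.
Qed.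

Lemma ptyp_apps : forall l f G T, ptyp G (apps f l) T ->
  exists A, ptyp G f A /\ ar A = length l + ar T.
Proof.
  induction l; intros f G T H; simpl in *.
  - exists T; auto.
  - destruct (IHl _ _ _ H) as [A [HA E]]. inversion HA; subst; [|nocr_tac].
    exists (Arr A0 A). split; auto. simpl; lia.
Qed.

Lemma e_arg : forall K x, ptyp [Arr O O; K] (App (Var 0) x) O -> ptyp [Arr O O; K] x O.
Proof.
  intros K x H. inversion H; subst; [|nocr_tac].
  match goal with H1 : typ _ _ (Var 0) _ |- _ => inversion H1; subst; [|nocr_tac] end.
  match goal with H1 : nth_error _ 0 = Some _ |- _ => simpl in H1; inversion H1; subst end.
  auto.
Qed.

Lemma walk : forall b, normal b -> forall p q,
  ptyp [Arr O O; kk p] b O -> ptyp [Arr O O; kk q] b O -> p = q.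
Proof.
  induction b; intros Nb p q Hn Hm.
  - inversion Hn; subst; [|nocr_tac]. inversion Hm; subst; [|nocr_tac].
    destruct n as [|[|i]]; simpl in *; try discriminate.
    + inversion H1. inversion H2. destruct p, q; simpl in *; try discriminate; auto.
    + destruct i; discriminate.
  - assert (Ne : neutral (App b1 b2)) by exact Nb.
    destruct (neutral_spine _ Ne) as [h [l E]].
    pose proof Hn as Hn'. pose proof Hm as Hm'.
    rewrite E in Hn', Hm'.
    destruct (ptyp_apps _ _ _ _ Hn') as [An [HAn En]].
    destruct (ptyp_apps _ _ _ _ Hm') as [Am [HAm Em]].
    inversion HAn; subst; [|nocr_tac]. inversion HAm; subst; [|nocr_tac].
    destruct h as [|[|h]]; simpl in *.
    + inversion H1; inversion H2; subst. simpl in *.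
      destruct l as [|x [|y l]]; simpl in *; try lia.
      inversion E; subst.
      apply e_arg in Hn. apply e_arg in Hm.
      eapply IHb2; eauto. apply Nb.
    + inversion H1; inversion H2; subst. rewrite ar_kk in *. lia.
    + destruct h; discriminate.
  - inversion Hn; subst; nocr_tac.
Qed.

Lemma top : forall v n m, normal v -> ptyp [kk n] v (kk 1) -> ptyp [kk m] v (kk 1) -> n = m.
Proof.
  intros v n m Nv Hn Hm. destruct v.
  - inversion Hn; subst; [|nocr_tac]. inversion Hm; subst; [|nocr_tac].
    destruct n0 as [|i]; simpl in *; [|destruct i; discriminate].
    inversion H1; inversion H2.
    assert (ar (kk n) = ar (kk m)) by congruence. rewrite !ar_kk in *. auto.
  - assert (Ne : neutral (App v1 v2)) by exact Nv.
    destruct (neutral_spine _ Ne) as [h [l E]]. rewrite E in Hn, Hm.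
    destruct (ptyp_apps _ _ _ _ Hn) as [An [HAn En]].
    destruct (ptyp_apps _ _ _ _ Hm) as [Am [HAm Em]].
    inversion HAn; subst; [|nocr_tac]. inversion HAm; subst; [|nocr_tac].
    destruct h as [|i]; simpl in *; [|destruct i; discriminate].
    inversion H1; inversion H2; subst. rewrite !ar_kk in *. simpl in *. lia.
  - inversion Hn; subst; [|nocr_tac]. inversion Hm; subst; [|nocr_tac].
    apply (walk v); auto.
Qed.

Lemma repeat_snoc : forall (x : term) n, repeat x (S n) = repeat x n ++ [x].
Proof. induction n; simpl; auto. rewrite <- IHn. reflexivity. Qed.

Lemma prefix_apps : forall n, scott_prefix n = apps (App B_comb Y0) (repeat S_comb n).
Proof.
  induction n; simpl; auto. rewrite IHn. rewrite <- apps_snoc. rewrite <- repeat_snoc. reflexivity.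
Qed.

Lemma red_apps : forall l f f', red f f' -> red (apps f l) (apps f' l).
Proof. induction l; intros; simpl; auto. apply IHl. apply red_appl; auto. Qed.

Definition V (n : nat) : term :=
  match n with
  | 0 => Omg
  | 1 => core1
  | S (S j) => apps corep (repeat S_comb j ++ [I_comb])
  end.

Lemma red_UV : forall n, 1 <= n -> red (U n) (V n).
Proof.
  intros [|[|j]] H; [lia| |].
  - apply (redps_sound [[0;0];[0];[];[1];[1;2;2;0];[];[0;2];[1;2]]). vm_compute. reflexivity.
  - unfold U. rewrite prefix_apps. rewrite <- apps_snoc. simpl.
    apply red_apps.
    apply (redps_sound [[0;0];[0];[];[1];[1;2;2;0];[1;2;2];[];[0;2];[1;2]]). vm_compute. reflexivity.
Qed.

Lemma typ_S : forall cr G i, typ cr G S_comb (aa (S (S i))).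
Proof.
  intros. simpl. unfold S_comb. apply t_lam, t_lam, t_lam.
  eapply t_app; eapply t_app; apply t_var; reflexivity.
Qed.

Lemma typ_I : forall cr G, typ cr G I_comb (aa 1).
Proof. intros. simpl. apply t_lam. apply t_var. reflexivity. Qed.

Lemma typ_stack : forall cr G j h, typ cr G h (kk (S (S j))) ->
  typ cr G (apps h (repeat S_comb j ++ [I_comb])) (kk 1).
Proof.
  intros cr G j. induction j; intros h H; simpl.
  - eapply t_app; [exact H|apply typ_I].
  - apply IHj. eapply t_app; [exact H|apply typ_S].
Qed.

Lemma typ_V : forall n, 1 <= n -> typ (crn n) [] (V n) (kk 1).
Proof.
  intros [|[|j]] H; [lia| |].
  - apply t_cr. left. auto.
  - simpl. apply typ_stack. apply t_cr. right. split; [lia|auto].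
Qed.

Lemma Omg_red : forall c, red Omg c -> c = Omg.
Proof.
  intros c H. remember Omg as o. induction H; subst; auto.
  inversion H; subst.
  - apply IHred. reflexivity.
  - apply beta_hr in H4; discriminate.
  - apply beta_hr in H4; discriminate.
Qed.

Lemma Omg_untyp : forall n T, ~ typ (crn n) [] Omg T.
Proof.
  intros n T H. unfold Omg in H. untyp_tac.
Qed.

Lemma beq_app_l : forall a b c, beta_eq a b -> beta_eq (App a c) (App b c).
Proof.
  intros a b c H; induction H.
  - apply rst_step. constructor; auto.
  - apply rst_refl.
  - apply rst_sym; auto.
  - eapply rst_trans; eauto.
Qed.

Lemma key0 : forall m, 1 <= m -> ~ beta_eq (U 0) (U m).
Proof.
  intros m Hm H.
  apply (beq_app_l _ _ I_comb) in H.
  assert (R0 : red (App (U 0) I_comb) Omg).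
  { apply (redps_sound [[0;0];[0];[];[1];[];[0;2];[1;2]]). vm_compute. reflexivity. }
  assert (H' : beta_eq Omg (App (U m) I_comb)).
  { eapply rst_trans; [apply rst_sym; apply red_beq; exact R0|exact H]. }
  destruct (CR _ _ H') as [c [Hc1 Hc2]]. apply Omg_red in Hc1. subst c.
  assert (R1 : red (App (U m) I_comb) (App (V m) I_comb)) by (apply red_appl, red_UV; auto).
  destruct (confl _ _ _ Hc2 R1) as [d [Hd1 Hd2]]. apply Omg_red in Hd1. subst d.
  assert (T : typ (crn m) [] (App (V m) I_comb) O).
  { eapply t_app; [apply typ_V; auto|]. apply t_lam. apply t_var. reflexivity. }
  eapply Omg_untyp. eapply sr_n; eauto.
Qed.

Lemma keynm : forall n m, 1 <= n -> 1 <= m -> beta_eq (U n) (U m) -> n = m.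
Proof.
  intros n m Hn Hm H.
  assert (H' : beta_eq (V n) (V m)).
  { eapply rst_trans; [apply rst_sym; apply red_beq; apply red_UV; auto|].
    eapply rst_trans; [exact H|apply red_beq; apply red_UV; auto]. }
  destruct (CR _ _ H') as [t [R1 R2]].
  assert (T1 : typ (crn n) [] t (kk 1)) by (eapply sr_n; [exact R1|apply typ_V; auto]).
  assert (T2 : typ (crn m) [] t (kk 1)) by (eapply sr_n; [exact R2|apply typ_V; auto]).
  apply flat_typ in T1. apply flat_typ in T2. simpl in T1, T2.
  destruct (WN _ _ _ T1) as [v [Rv Nv]].
  apply (top v); auto; eapply p_sr_red; eauto.
Qed.

Theorem corollary4p17 : forall n m : nat, n <> m -> ~ beta_eq (U n) (U m).
Proof.
  intros n m Hnm H.
  destruct n as [|n]; destruct m as [|m].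
  - apply Hnm; reflexivity.
  - apply (key0 (S m)); auto; lia.
  - apply (key0 (S n)); [lia|]. apply rst_sym; auto.
  - apply Hnm. apply keynm; auto; lia.
Qed.
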